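(* Let $G$ be a finitely generated group, $H\le G$ a subgroup, and $\Omega\le\operatorname{Aut}(G)$ such that $\phi(H)=H$ for all $\phi\in\Omega$. Let $P=\{\phi|_H:\phi\in\Omega\}\le\operatorname{Aut}(H)$. Then $\alpha_{H^P\subseteq G}\preccurlyeq\alpha_{G^\Omega}$.
   Context: Fix a finite generating set $\Sigma$ of $G$ and the word length $|\cdot|_\Sigma$. For $\Omega\le\operatorname{Aut}(G)$, the $\Omega$-automorphic growth function sends $n$ to the number of $\Omega$-orbits of $G$ containing an element of length at most $n$; $\alpha_{G^\Omega}$ is its $\sim$-class. For a subset $U\subseteq G$ and a group $P$ of permutations of $U$, the relative $P$-automorphic growth $\alpha_{U^P\subseteq G}$ is the $\sim$-class of the function sending $n$ to the number of $P$-orbits of $U$ containing an element $u$ with $|u|_\Sigma\le n$ (word length measured in $G$). For non-decreasing non-zero $f,g\colon\mathbb{N}\to\mathbb{N}$, $f\preccurlyeq g$ means there is $\lambda\in\mathbb{N}\setminus\{0\}$ with $f(n)\le\lambda g(\lambda n+\lambda)+\lambda$ for all $n$, and $f\sim g$ means $f\preccurlyeq g$ and $g\preccurlyeq f$. These classes do not depend on $\Sigma$. *)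

(* Defs.v *)
From Stdlib Require Import Arith List ClassicalEpsilon.
Import ListNotations.
Set Implicit Arguments.

Record Group := {
  carrier :> Type;
  gmul : carrier -> carrier -> carrier;
  gone : carrier;
  ginv : carrier -> carrier;
  gmulA : forall x y z, gmul x (gmul y z) = gmul (gmul x y) z;
  gmul1g : forall x, gmul gone x = x;
  gmulg1 : forall x, gmul x gone = x;
  gmulVg : forall x, gmul (ginv x) x = gone;
  gmulgV : forall x, gmul x (ginv x) = gone
}.

Section Defs.
Variable G : Group.

Definition is_subgroup (H : G -> Prop) : Prop :=
  H (gone G) /\ (forall x y, H x -> H y -> H (gmul G x y)) /\
  (forall x, H x -> H (ginv G x)).

Definition is_automorphism (phi : G -> G) : Prop :=
  (forall x y, phi (gmul G x y) = gmul G (phi x) (phi y)) /\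
  (forall x y, phi x = phi y -> x = y) /\
  (forall y, exists x, phi x = y).

Definition is_aut_subgroup (Omega : (G -> G) -> Prop) : Prop :=
  (forall phi, Omega phi -> is_automorphism phi) /\
  Omega (fun x => x) /\
  (forall phi psi, Omega phi -> Omega psi -> Omega (fun x => phi (psi x))) /\
  (forall phi, Omega phi -> exists psi, Omega psi /\
      (forall x, psi (phi x) = x) /\ (forall x, phi (psi x) = x)).

Fixpoint eval_word (w : list (bool * G)) : G :=
  match w with
  | [] => gone G
  | (b, s) :: w' => gmul G (if b then ginv G s else s) (eval_word w')
  end.

Definition word_over (Sigma : list G) (w : list (bool * G)) : Prop :=
  forall p, In p w -> In (snd p) Sigma.

Definition generates (Sigma : list G) : Prop :=
  forall g, exists w, word_over Sigma w /\ eval_word w = g.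

Definition wlen_le (Sigma : list G) (g : G) (n : nat) : Prop :=
  exists w, word_over Sigma w /\ length w <= n /\ eval_word w = g.

End Defs.

Definition is_count (X : Type) (R : X -> X -> Prop) (B : X -> Prop) (k : nat) : Prop :=
  exists L : list X, length L = k /\ (forall x, In x L -> B x) /\
    ForallOrdPairs (fun a b => ~ R a b) L /\
    (forall x, B x -> exists y, In y L /\ R y x).

Definition count_classes (X : Type) (R : X -> X -> Prop) (B : X -> Prop) : nat :=
  epsilon (inhabits 0) (fun k => is_count R B k).

(* Omega-automorphic growth function: n |-> number of Omega-orbits of G
   containing an element of length <= n. *)
Definition aut_growth (G : Group) (Sigma : list G) (Omega : (G -> G) -> Prop)
  (n : nat) : nat :=
  count_classes (fun x y => exists phi, Omega phi /\ phi x = y)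
                (fun g => @wlen_le G Sigma g n).

(* Relative P-automorphic growth of U ⊆ G, P a group of permutations of U;
   word length measured in G. *)
Definition rel_growth (G : Group) (Sigma : list G) (U : G -> Prop)
  (P : ({x : G | U x} -> {x : G | U x}) -> Prop) (n : nat) : nat :=
  count_classes (fun u v => exists p, P p /\ p u = v)
                (fun u => @wlen_le G Sigma (proj1_sig u) n).

Definition preccurlyeq (f g : nat -> nat) : Prop :=
  exists lam, lam <> 0 /\ forall n, f n <= lam * g (lam * n + lam) + lam.

Definition restrictions (G : Group) (H : G -> Prop) (Omega : (G -> G) -> Prop)
  (p : {x : G | H x} -> {x : G | H x}) : Prop :=
  exists phi, Omega phi /\ forall u, proj1_sig (p u) = phi (proj1_sig u).

Arguments is_subgroup {G} H.
Arguments is_automorphism {G} phi.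
Arguments is_aut_subgroup {G} Omega.
Arguments generates {G} Sigma.
Arguments wlen_le {G} Sigma g n.
Arguments eval_word {G} w.
Arguments word_over {G} Sigma w.
Arguments aut_growth {G} Sigma Omega n.
Arguments rel_growth {G} Sigma U P n.
Arguments restrictions {G} H Omega p.

(* Main.v *)
Require Import Defs.
From Stdlib Require Import Arith List Lia Classical ClassicalEpsilon ProofIrrelevance.
Import ListNotations.

Lemma count_le (X : Type) (R : X -> X -> Prop)
  (Rsym : forall a b, R a b -> R b a)
  (Rtr : forall a b c, R a b -> R b c -> R a c) :
  forall (L1 L2 : list X), ForallOrdPairs (fun a b => ~ R a b) L1 ->
  (forall x, In x L1 -> exists y, In y L2 /\ R y x) -> length L1 <= length L2.
Proof.
  induction L1 as [|x L1 IH]; intros L2 HF Hc; simpl; [lia|].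
  inversion HF as [|? ? Hx HF']; subst.
  destruct (Hc x (or_introl eq_refl)) as [y [Hy Ryx]].
  destruct (in_split _ _ Hy) as [l1 [l2 E]]; subst L2.
  assert (length L1 <= length (l1 ++ l2)).
  { apply IH; auto. intros z Hz.
    destruct (Hc z (or_intror Hz)) as [y' [Hy' Ryz]].
    exists y'; split; auto.
    apply in_app_or in Hy'. destruct Hy' as [H1|[H1|H1]];
      try (apply in_or_app; auto; fail).
    subst y'. exfalso. rewrite Forall_forall in Hx. apply (Hx z Hz).
    eapply Rtr; [apply Rsym; exact Ryx| exact Ryz]. }
  rewrite length_app in *; simpl; lia.
Qed.

Lemma exists_count (X : Type) (R : X -> X -> Prop) (B : X -> Prop)
  (Rrefl : forall a, R a a)
  (Rsym : forall a b, R a b -> R b a)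
  (Rtr : forall a b c, R a b -> R b c -> R a c) (C : list X) :
  (forall b, B b -> In b C) -> exists k, is_count R B k.
Proof.
  intro HC.
  assert (exists L, (forall x, In x L -> B x) /\ ForallOrdPairs (fun a b => ~ R a b) L /\
     (forall c, In c C -> B c -> exists y, In y L /\ R y c)) as [L [H1 [H2 H3]]].
  { clear HC. induction C as [|c C IH].
    - exists []. split; [simpl; tauto|split; [constructor|simpl; tauto]].
    - destruct IH as [L [H1 [H2 H3]]].
      destruct (classic (B c)) as [Bc|nBc].
      + destruct (classic (exists y, In y L /\ R y c)) as [Ey|nEy].
        * exists L. split; auto. split; auto.
          intros c' [<-|Hc'] Bc'; auto.
        * exists (c :: L). split; [intros x [<-|Hx]; auto|].
          split.
          -- constructor; auto. rewrite Forall_forall. intros b Hb Rcb.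
             apply nEy. exists b. split; auto.
          -- intros c' [<-|Hc'] Bc'.
             ++ exists c. split; [left; auto| apply Rrefl].
             ++ destruct (H3 c' Hc' Bc') as [y [Hy Ry]]. exists y; split; simpl; auto.
      + exists L. split; auto. split; auto.
        intros c' [<-|Hc'] Bc'; [contradiction|auto]. }
  exists (length L). exists L. split; [reflexivity|]. split; [exact H1|]. split; [exact H2|].
  intros x Bx. destruct (H3 x (HC x Bx) Bx) as [y [Hy Ry]]. eauto.
Qed.

Lemma count_spec (X : Type) (R : X -> X -> Prop) (B : X -> Prop) :
  (exists k, is_count R B k) -> is_count R B (count_classes R B).
Proof.
  intro E. unfold count_classes. apply epsilon_spec. exact E.
Qed.

Section W.
Variable G : Group.
Variable Sigma : list G.

Definition letters : list (bool * G) :=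
  flat_map (fun s => [(false, s); (true, s)]) Sigma.

Fixpoint words (n : nat) : list (list (bool * G)) :=
  match n with
  | 0 => [[]]
  | S n => words n ++ flat_map (fun p => map (fun w => p :: w) (words n)) letters
  end.

Lemma nil_words n : In [] (words n).
Proof. induction n; simpl; auto. apply in_or_app; auto. Qed.

Lemma in_words n : forall w, word_over Sigma w -> length w <= n -> In w (words n).
Proof.
  induction n; intros w Hw Hl.
  - destruct w; simpl in *; [auto|lia].
  - simpl. apply in_or_app. destruct w as [|p w].
    + left. apply nil_words.
    + right. apply in_flat_map. exists p. split.
      * unfold letters. apply in_flat_map. exists (snd p). split.
        -- apply Hw. left; auto.
        -- destruct p as [[] s]; simpl; auto.
      * apply in_map. apply IHn; simpl in *; [|lia].
        intros q Hq. apply Hw. right; auto.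
Qed.
End W.

Lemma sig_ext (G : Group) (H : G -> Prop) (a b : {x : G | H x}) :
  proj1_sig a = proj1_sig b -> a = b.
Proof.
  destruct a, b; simpl; intros; subst. f_equal. apply proof_irrelevance.
Qed.

Theorem mainTheorem14 (G : Group) (Sigma : list G) (H : G -> Prop)
  (Omega : (G -> G) -> Prop) :
  generates Sigma ->
  is_subgroup H ->
  is_aut_subgroup Omega ->
  (forall phi, Omega phi ->
     (forall x, H x -> H (phi x)) /\ (forall y, H y -> exists x, H x /\ phi x = y)) ->
  preccurlyeq (rel_growth Sigma H (restrictions H Omega))
              (aut_growth Sigma Omega).
Proof.
  intros Hgen HH [Haut [Hid [Hcomp Hinv]]] Hstab.
  set (R2 := fun x y : G => exists phi, Omega phi /\ phi x = y).
  set (R1 := fun u v : {x : G | H x} =>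
               exists p, restrictions H Omega p /\ p u = v).
  assert (R2refl : forall a, R2 a a) by (intro a; exists (fun x => x); auto).
  assert (R2sym : forall a b, R2 a b -> R2 b a).
  { intros a b [phi [Hp E]]. destruct (Hinv phi Hp) as [psi [Hps [E1 E2]]].
    exists psi. split; auto. subst b. auto. }
  assert (R2tr : forall a b c, R2 a b -> R2 b c -> R2 a c).
  { intros a b c [phi [Hp E]] [psi [Hps E']]. exists (fun x => psi (phi x)).
    split; auto. subst; auto. }
  assert (R1R2 : forall u v, R1 u v -> R2 (proj1_sig u) (proj1_sig v)).
  { intros u v [p [[phi [Hp Ep]] E]]. exists phi. split; auto. rewrite <- E, Ep. auto. }
  assert (R2R1 : forall u v, R2 (proj1_sig u) (proj1_sig v) -> R1 u v).
  { intros u v [phi [Hp E]].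
    destruct (Hstab phi Hp) as [Hs _].
    exists (fun w => exist _ (phi (proj1_sig w)) (Hs _ (proj2_sig w))).
    split.
    - exists phi. split; auto.
    - apply sig_ext. simpl. auto. }
  exists 1. split; [lia|]. intro n.
  replace (1 * n + 1) with (S n) by lia.
  unfold rel_growth, aut_growth. fold R1 R2.
  set (B1 := fun u : {x : G | H x} => wlen_le Sigma (proj1_sig u) n).
  set (B2 := fun g : G => wlen_le Sigma g (S n)).
  assert (C1 : is_count R1 B1 (count_classes R1 B1)).
  { apply count_spec.
    apply (@exists_count _ R1 B1
      (fun u => R2R1 u u (R2refl _))
      (fun a b h => R2R1 b a (R2sym _ _ (R1R2 a b h)))
      (fun a b c h1 h2 => R2R1 a c (R2tr _ _ _ (R1R2 a b h1) (R1R2 b c h2)))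
      (flat_map (fun w => match excluded_middle_informative (H (eval_word w)) with
                          | left h => [exist _ (eval_word w) h]
                          | right _ => [] end) (words _ Sigma n))).
    intros [x hx] [w [Hw [Hl E]]]. apply in_flat_map. exists w. split.
    - apply (in_words _ Sigma); auto.
    - destruct (excluded_middle_informative (H (eval_word w))) as [h|h].
      + left. apply sig_ext. simpl. auto.
      + simpl in E. subst x. contradiction. }
  assert (C2 : is_count R2 B2 (count_classes R2 B2)).
  { apply count_spec.
    apply (@exists_count _ R2 B2 R2refl R2sym R2tr (map (@eval_word G) (words _ Sigma (S n)))).
    intros b [w [Hw [Hl E]]]. subst b. apply in_map. apply (in_words _ Sigma); auto. }
  destruct C1 as [L1 [E1 [In1 [F1 Cov1]]]].
  destruct C2 as [L2 [E2 [In2 [F2 Cov2]]]].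
  rewrite <- E1, <- E2.
  assert (length (map (@proj1_sig _ _) L1) <= length L2).
  { apply (@count_le _ R2 R2sym R2tr).
    - clear -F1 R2R1. induction F1; simpl; constructor; auto.
      apply Forall_map. eapply Forall_impl; [|exact H0].
      intros b nR Rab. apply nR. apply R2R1; auto.
    - intros x Hx. apply in_map_iff in Hx. destruct Hx as [u [<- Hu]].
      apply Cov2. destruct (In1 u Hu) as [w [Hw [Hl E]]].
      exists w. split; auto. }
  rewrite length_map in H0. lia.
Qed.
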